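(* Let $\mathcal{E}_2$ be the genus-$2$ Goeritz group of the $3$-sphere acting on $H_1(\Sigma_2)=H_1(\Sigma_2;\mathbb{Z})$. Then the coinvariant module vanishes: \[ H_1(\Sigma_2)_{\mathcal{E}_2} = 0 . \]
   Context: Let $S^3=H_2\cup H_2^*$ be a genus-$2$ Heegaard splitting with Heegaard surface $\Sigma_2=\partial H_2$. The genus-$2$ Goeritz group $\mathcal{E}_2$ is the group of isotopy classes $[f]$ of orientation-preserving homeomorphisms of $\Sigma_2$ for which there is an orientation-preserving self-homeomorphism $F$ of $S^3$ with $F(H_2)=H_2$ and $[F|_{\Sigma_2}]=[f]$; it acts on $H_1(\Sigma_2;\mathbb{Z})$ by induced maps. Fix a basis $x_1,x_2,y_1,y_2$ of $H_1(\Sigma_2;\mathbb{Z})$ (with $x_i$ meridian-type and $y_i$ longitude-type classes, $x_i\cdot y_i=1$). $\mathcal{E}_2$ is generated by four elements $\alpha,\beta,\gamma,\delta$ acting as follows: $\alpha_*(x_i)=-x_i$, $\alpha_*(y_i)=-y_i$ ($i=1,2$); $\beta_*(x_1)=x_1$, $\beta_*(x_2)=-x_2$, $\beta_*(y_1)=y_1$, $\beta_*(y_2)=-y_2$; $\gamma_*(x_1)=-x_2$, $\gamma_*(x_2)=-x_1$, $\gamma_*(y_1)=-y_2$, $\gamma_*(y_2)=-y_1$; $\delta_*(x_1)=-x_1+x_2$, $\delta_*(x_2)=-x_1$, $\delta_*(y_1)=y_2$, $\delta_*(y_2)=-y_1-y_2$. For a group $G$ and a left $G$-module $N$, the coinvariant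 module $N_G$ is the quotient of $N$ by the subgroup generated by $\{gn-n : g\in G,\ n\in N\}$. *)

(* Defs.v *)
From HB Require Import structures.
From mathcomp Require Import all_boot all_order all_algebra.
Set Implicit Arguments. Unset Strict Implicit. Unset Printing Implicit Defensive.
Import Order.TTheory GRing.Theory Num.Theory.
Local Open Scope ring_scope.

(* H_1(Sigma_2; Z) is identified with Z^4 = 'cV[int]_4 via the ordered basis
   (x1, x2, y1, y2) = (e_0, e_1, e_2, e_3).  A homeomorphism acts by the
   matrix whose j-th column is the image of the j-th basis vector. *)
Definition H1 := 'cV[int]_4.

Definition mx_of_cols (c0 c1 c2 c3 : 'cV[int]_4) : 'M[int]_4 :=
  \matrix_(i < 4, j < 4)
    (match val j with 0 => c0 | 1 => c1 | 2 => c2 | _ => c3 end) i ord0.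

Definition vec4 (a b c d : int) : 'cV[int]_4 :=
  \col_(i < 4) (match val i with 0 => a | 1 => b | 2 => c | _ => d end).

Definition goe_alpha : 'M[int]_4 :=
  mx_of_cols (vec4 (-1) 0 0 0) (vec4 0 (-1) 0 0) (vec4 0 0 (-1) 0) (vec4 0 0 0 (-1)).
Definition goe_beta : 'M[int]_4 :=
  mx_of_cols (vec4 1 0 0 0) (vec4 0 (-1) 0 0) (vec4 0 0 1 0) (vec4 0 0 0 (-1)).
Definition goe_gamma : 'M[int]_4 :=
  mx_of_cols (vec4 0 (-1) 0 0) (vec4 (-1) 0 0 0) (vec4 0 0 0 (-1)) (vec4 0 0 (-1) 0).
Definition goe_delta : 'M[int]_4 :=
  mx_of_cols (vec4 (-1) 1 0 0) (vec4 (-1) 0 0 0) (vec4 0 0 0 1) (vec4 0 0 (-1) (-1)).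

(* The image of the Goeritz group E_2 in GL(H_1(Sigma_2)) = GL_4(Z):
   the subgroup generated by the images of alpha, beta, gamma, delta. *)
Inductive goeritz_image : 'M[int]_4 -> Prop :=
  | gi_one : goeritz_image 1%:M
  | gi_alpha : goeritz_image goe_alpha
  | gi_beta : goeritz_image goe_beta
  | gi_gamma : goeritz_image goe_gamma
  | gi_delta : goeritz_image goe_delta
  | gi_mul g h : goeritz_image g -> goeritz_image h -> goeritz_image (g *m h)
  | gi_inv g : goeritz_image g -> goeritz_image (invmx g).

Inductive coinv_rel : H1 -> Prop :=
  | cr_gen g (n : H1) : goeritz_image g -> coinv_rel (g *m n - n)
  | cr_zero : coinv_rel 0
  | cr_add u v : coinv_rel u -> coinv_rel v -> coinv_rel (u + v)
  | cr_opp u : coinv_rel u -> coinv_rel (- u).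

(* The coinvariant module H_1/coinv_rel is zero iff coinv_rel is everything. *)
Definition coinvariants_trivial : Prop := forall v : H1, coinv_rel v.

(* Main.v *)
Require Import Defs.
From mathcomp Require Import all_boot all_order all_algebra.
Import GRing.Theory.
Local Open Scope ring_scope.

Definition e (k : 'I_4) : H1 := delta_mx k 0.

Ltac vecq := apply/matrixP; move=> [[|[|[|[|?]]]] ?] [[|?] ?] //;
  rewrite !mxE ?big_ord_recr ?big_ord0 /= !mxE /=; done.

Lemma cr_scale (z : int) u : coinv_rel u -> coinv_rel (z *: u).
Proof.
move=> H; case: z => n.
  elim: n => [|n IH]; first by rewrite scale0r; exact: cr_zero.
  by rewrite intS scalerDl scale1r; apply: cr_add.
rewrite NegzE scaleNr; apply: cr_opp.
elim: n => [|n IH]; first by rewrite scale1r.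
by rewrite intS scalerDl scale1r; apply: cr_add.
Qed.

Lemma two_e k : coinv_rel (e k *+ 2).
Proof.
have := cr_opp (cr_gen (e k) gi_alpha).
suff -> : - (goe_alpha *m e k - e k) = e k *+ 2 by [].
case: k => [[|[|[|[|k]]]] Hk] //; rewrite /e; vecq.
Qed.

Lemma gd k : coinv_rel (goe_delta *m e k - e k).
Proof. exact: cr_gen gi_delta. Qed.

Definition i0 : 'I_4 := @Ordinal 4 0 isT.
Definition i1 : 'I_4 := @Ordinal 4 1 isT.
Definition i2 : 'I_4 := @Ordinal 4 2 isT.
Definition i3 : 'I_4 := @Ordinal 4 3 isT.

Lemma e1 : coinv_rel (e i1).
Proof.
have := cr_add (gd i0) (two_e i0).
suff -> : goe_delta *m e i0 - e i0 + e i0 *+ 2 = e i1 by [].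
rewrite /e; vecq.
Qed.

Lemma e0 : coinv_rel (e i0).
Proof.
have := cr_add (cr_opp (gd i1)) (cr_opp e1).
suff -> : - (goe_delta *m e i1 - e i1) + - e i1 = e i0 by [].
rewrite /e; vecq.
Qed.

Lemma e2 : coinv_rel (e i2).
Proof.
have := cr_add (cr_opp (gd i3)) (cr_opp (two_e i3)).
suff -> : - (goe_delta *m e i3 - e i3) + - (e i3 *+ 2) = e i2 by [].
rewrite /e; vecq.
Qed.

Lemma e3 : coinv_rel (e i3).
Proof.
have := cr_add (gd i2) e2.
suff -> : (goe_delta *m e i2 - e i2) + e i2 = e i3 by [].
rewrite /e; vecq.
Qed.

Lemma eall k : coinv_rel (e k).
Proof.
case: k => [[|[|[|[|k]]]] Hk] //.
- by rewrite (_ : Ordinal Hk = i0); [exact: e0 | exact: val_inj].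
- by rewrite (_ : Ordinal Hk = i1); [exact: e1 | exact: val_inj].
- by rewrite (_ : Ordinal Hk = i2); [exact: e2 | exact: val_inj].
- by rewrite (_ : Ordinal Hk = i3); [exact: e3 | exact: val_inj].
Qed.

Theorem lemma2p1 : coinvariants_trivial.
Proof.
move=> v.
rewrite [v]matrix_sum_delta.
apply: (big_ind coinv_rel); [exact: cr_zero | exact: cr_add | move=> i _].
apply: (big_ind coinv_rel); [exact: cr_zero | exact: cr_add | move=> j _].
rewrite ord1; exact: cr_scale (eall i).
Qed.
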